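(* Let $G$ be a topological gyrogroup and let $\phi:G\to\mathbb{R}$ be a continuous bounded function. Then there is a bounded continuous function $\Phi:G^{\bullet}\to\mathbb{R}$ with $\Phi(x^{\bullet})=\phi(x)$ for all $x\in G$, where $x^{\bullet}$ is the constant function with value $x$.
   Context: A gyrogroup is a set $G$ with a binary operation $\oplus$ such that: (G1) there is a unique identity $0$ with $0\oplus a=a=a\oplus 0$; (G2) each $x$ has a unique inverse $\ominus x$ with $\ominus x\oplus x=0=x\oplus(\ominus x)$; (G3) for all $x,y$ there is an automorphism $\mathrm{gyr}[x,y]$ of $(G,\oplus)$ with $x\oplus(y\oplus z)=(x\oplus y)\oplus \mathrm{gyr}[x,y](z)$ for all $z$; (G4) $\mathrm{gyr}[x\oplus y,y]=\mathrm{gyr}[x,y]$. A topological gyrogroup is a gyrogroup with a topology (all spaces are assumed $T_1$) such that $\oplus$ is jointly continuous and $x\mapsto\ominus x$ is continuous. Construction: let $J=[0,1)$ and let $G^{\bullet}$ be the set of all functions $f:J\to G$ for which there exist $0=a_0<a_1<\dots<a_n=1$ with $f$ constant on each $[a_k,a_{k+1})$, with pointwise operation $(f\oplus^{\bullet}g)(r)=f(r)\oplus g(r)$. For an open neighbourhood $V$ of $0$ in $G$ and $\varepsilon>0$ let $O(V,\varepsilon)=\{f\in G^{\bullet}:\mu(\{r\in J: f(r)\notin V\})<\varepsilon\}$, $\mu$ Lebesgue measure. $G^{\bullet}$ carries the topological gyrogroup topology in which the sets $f\oplus^{\bullet}O(V,\varepsilon)$ form a local base at each $f\in G^{\bullet}$.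 *)

(* Defs.v *)
From HB Require Import structures.
From mathcomp Require Import all_boot all_order all_algebra.
From mathcomp Require Import all_classical all_reals all_analysis.
Set Implicit Arguments. Unset Strict Implicit. Unset Printing Implicit Defensive.
Import Order.TTheory GRing.Theory Num.Theory.
Import numFieldNormedType.Exports.
Local Open Scope classical_set_scope.
Local Open Scope ring_scope.

Definition is_gyrogroup (G : Type) (op : G -> G -> G) (e : G) (inv : G -> G) : Prop :=
  (forall a, op e a = a /\ op a e = a) /\
  (forall e', (forall a, op e' a = a /\ op a e' = a) -> e' = e) /\
  (forall x, op (inv x) x = e /\ op x (inv x) = e) /\
  (forall x y, op y x = e /\ op x y = e -> y = inv x) /\
  (exists gyr : G -> G -> G -> G,
     (forall x y, bijective (gyr x y) /\
                  (forall a b, gyr x y (op a b) = op (gyr x y a) (gyr x y b))) /\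
     (forall x y z, op x (op y z) = op (op x y) (gyr x y z)) /\
     (forall x y, gyr (op x y) y = gyr x y)).

Definition is_top_gyrogroup (G : topologicalType) (op : G -> G -> G) (e : G)
    (inv : G -> G) : Prop :=
  is_gyrogroup op e inv /\ accessible_space G /\
  continuous (fun p : G * G => op p.1 p.2) /\ continuous inv.

Definition J (R : realType) := {r : R | (0 <= r < 1)%R}.

Definition is_step (R : realType) (G : Type) (f : J R -> G) : Prop :=
  exists (n : nat) (a : nat -> R),
    a 0%N = 0 /\ a n = 1 /\ (forall k, (k < n)%N -> a k < a k.+1) /\
    (forall k (r s : J R), (k < n)%N ->
        a k <= sval r < a k.+1 -> a k <= sval s < a k.+1 -> f r = f s).

Definition Gbul (R : realType) (G : Type) := {f : J R -> G | is_step f}.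

Lemma const_is_step (R : realType) (G : Type) (x : G) :
  is_step (fun _ : J R => x).
Proof.
exists 1%N, (fun k => k%:R); split; first by [].
split; first by [].
split; last by [].
by move=> k; rewrite ltnS leqn0 => /eqP ->; rewrite ltr01.
Qed.

Definition cbul (R : realType) (G : Type) (x : G) : Gbul R G :=
  exist _ (fun _ => x) (const_is_step R x).

Definition in_O (R : realType) (G : Type) (V : set G) (eps : R) (f : Gbul R G) : Prop :=
  (lebesgue_measure (sval @` [set j : J R | ~ V (sval f j)]) < eps%:E)%E.

(* Continuity of Phi : G^bullet -> R at every point, w.r.t. the topology whose
   local base at f is { f (+) O(V, eps) : V open nbhd of e in G, eps > 0 },
   where (+) is the pointwise operation. *)
Definition Gbul_continuous (R : realType) (G : topologicalType)
    (op : G -> G -> G) (e : G) (Phi : Gbul R G -> R) : Prop :=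
  forall (f : Gbul R G) (delta : R), 0 < delta ->
    exists (V : set G) (eps : R),
      open V /\ V e /\ 0 < eps /\
      forall g h : Gbul R G,
        in_O V eps g ->
        (forall j, sval h j = op (sval f j) (sval g j)) ->
        `|Phi h - Phi f| < delta.

(* Main.v *)
Require Import Defs.
From HB Require Import structures.
From mathcomp Require Import all_boot all_order all_algebra.
From mathcomp Require Import all_classical all_reals all_analysis.
From mathcomp Require Import measurable_realfun.
From mathcomp Require Import lra.
Import Order.TTheory GRing.Theory Num.Theory.
Import numFieldNormedType.Exports.
Local Open Scope classical_set_scope.
Local Open Scope ring_scope.


Lemma step_mono (R : realType) (n : nat) (a : nat -> R) :
  (forall k, (k < n)%N -> a k < a k.+1) -> forall i j, (i <= j <= n)%N -> a i <= a j.
Proof.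
move=> inc i j /andP[ij jn]; elim: j ij jn => [|j IH].
  by rewrite leqn0 => /eqP ->.
rewrite leq_eqVlt => /orP[/eqP -> //|]; rewrite ltnS => ij jn.
apply: le_trans (IH ij (ltnW jn)) _; exact/ltW/inc.
Qed.

Lemma step_cover (R : realType) (n : nat) (a : nat -> R) :
  a 0%N = 0 -> a n = 1 -> forall x, 0 <= x < 1 ->
  exists k, (k < n)%N /\ a k <= x < a k.+1.
Proof.
move=> a0 an x /andP[x0 x1].
suff H : forall m, x < a m -> exists k, (k < m)%N /\ a k <= x < a k.+1.
  by apply: H; rewrite an.
elim=> [|m IH]; first by rewrite a0 ltNge x0.
move=> xm; have [xm'|mx] := ltP x (a m).
  by have [k [km kx]] := IH xm'; exists k; split => //; exact: ltnW.
by exists m; rewrite mx xm.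
Qed.

Definition itvk (R : realType) (a : nat -> R) (k : nat) : set R :=
  [set` Interval (BLeft (a k)) (BLeft (a k.+1))].

Lemma step_meas (R : realType) (T : Type) (f : Gbul R T) (P : T -> Prop) :
  measurable (sval @` [set j : J R | P (sval f j)]).
Proof.
case: (svalP f) => n [a [a0 [an [ainc acst]]]].
pose C k := (k < n)%N /\ exists j : J R, a k <= sval j < a k.+1 /\ P (sval f j).
pose Fk k := [set x : R | C k /\ itvk R a k x].
have -> : sval @` [set j : J R | P (sval f j)] = \bigcup_k Fk k.
  apply/seteqP; split => x.
    move=> [j Pj <-]; have [k [kn kj]] := @step_cover R n a a0 an (sval j) (svalP j).
    exists k => //; split; first by split => //; exists j.
    by rewrite /itvk /= in_itv /=.
  move=> [k _] [[kn [j [kj Pj]]]].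
  rewrite /itvk /= in_itv /= => kx.
  have a0k : 0 <= a k by rewrite -a0; apply: (@step_mono R n a ainc); rewrite leq0n ltnW.
  have ak1 : a k.+1 <= 1 by rewrite -an; apply: (@step_mono R n a ainc); rewrite kn leqnn.
  have xJ : 0 <= x < 1.
    case/andP: (kx) => h1 h2; rewrite (le_trans a0k h1) /=; exact: lt_le_trans h2 ak1.
  exists (exist _ x xJ) => //=.
  by rewrite (acst k (exist _ x xJ) j kn kx kj).
apply: bigcupT_measurable => k; have [Ck|nCk] := pselect (C k).
  rewrite (_ : Fk k = itvk R a k); first exact: measurable_itv.
  by apply/seteqP; split => x //= [].
by rewrite (_ : Fk k = set0) //; apply/seteqP; split => x //= [].
Qed.

Lemma j0P (R : realType) : ((0:R) <= (0:R) < (1:R)). Proof. by rewrite lexx ltr01. Qed.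
Definition j0 (R : realType) : J R := exist _ 0 (@j0P R).
Definition ext (R : realType) (T : Type) (f : Gbul R T) (x : R) : T :=
  sval f (insubd (@j0 R) x).
Definition Dset (R : realType) : set R := `[(0:R), 1[%classic.

Lemma Dset_meas (R : realType) : measurable (Dset R).
Proof. exact: measurable_itv. Qed.

Lemma Dset_mu (R : realType) : lebesgue_measure (Dset R) = 1%E.
Proof. by rewrite lebesgue_measure_itv /= lte_fin ltr01 oppr0 adde0. Qed.

Lemma insubdJ (R : realType) (x : R) : Dset R x -> sval (insubd (@j0 R) x) = x.
Proof. by rewrite /Dset /= in_itv /= => H; rewrite insubdK. Qed.

Lemma ext_meas (R : realType) (T : Type) (f : Gbul R T) (phi : T -> R) :
  measurable_fun (Dset R) (fun x => phi (ext R T f x)).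
Proof.
move=> _ Y mY.
rewrite (_ : _ `&` _ = sval @` [set j : J R | Y (phi (sval f j))]).
  exact: (step_meas R T f (fun t => Y (phi t))).
apply/seteqP; split => x.
  move=> [Dx /= Yx]; exists (insubd (@j0 R) x) => //; exact: insubdJ.
move=> [j Yj <-]; split; first by rewrite /Dset /= in_itv /=; exact: (svalP j).
rewrite /= /ext.
have -> // : insubd (@j0 R) (sval j) = j.
by apply: val_inj; rewrite /= insubdJ //= /Dset /= in_itv /=; exact: (svalP j).
Qed.

Lemma ext_int (R : realType) (T : Type) (f : Gbul R T) (phi : T -> R) (M : R) :
  (forall t, `|phi t| <= M) ->
  lebesgue_measure.-integrable (Dset R) (EFin \o (fun x => phi (ext R T f x))).
Proof.
move=> HM; apply: measurable_bounded_integrable.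
- exact: Dset_meas.
- by have := Dset_mu R; rewrite /= => ->; rewrite ltry.
- exact: ext_meas.
exists M; split; first by rewrite num_real.
by move=> y My x _; apply: le_trans (HM _) (ltW My).
Qed.

Lemma int_diff (R : realType) (F1 F2 : R -> R) (M c K : R) (B : set R) :
  measurable_fun (Dset R) F1 -> measurable_fun (Dset R) F2 ->
  (forall x, `|F1 x| <= M) -> (forall x, `|F2 x| <= M) ->
  measurable B -> 0 <= c -> 0 <= K ->
  (forall x, Dset R x -> `|F1 x - F2 x| <= c + K * \1_B x) ->
  (`|fine (\int[lebesgue_measure]_(x in Dset R) (F1 x)%:E)
     - fine (\int[lebesgue_measure]_(x in Dset R) (F2 x)%:E)|%:E
   <= c%:E + K%:E * lebesgue_measure (B `&` Dset R))%E.
Proof.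
move=> m1 m2 b1 b2 mB c0 K0 H.
have mD := Dset_meas R.
have muD : lebesgue_measure (Dset R) = 1%E by have := Dset_mu R.
have i1 : lebesgue_measure.-integrable (Dset R) (EFin \o F1).
  apply: measurable_bounded_integrable => //; first by have := Dset_mu R; rewrite /= => ->; rewrite ltry.
  exists M; split; first by rewrite num_real.
  by move=> y My x _; apply: le_trans (b1 _) (ltW My).
have i2 : lebesgue_measure.-integrable (Dset R) (EFin \o F2).
  apply: measurable_bounded_integrable => //; first by have := Dset_mu R; rewrite /= => ->; rewrite ltry.
  exists M; split; first by rewrite num_real.
  by move=> y My x _; apply: le_trans (b2 _) (ltW My).
have f1 : (\int[lebesgue_measure]_(x in Dset R) (F1 x)%:E)%E \is a fin_num by apply: integrable_fin_num.
have f2 : (\int[lebesgue_measure]_(x in Dset R) (F2 x)%:E)%E \is a fin_num by apply: integrable_fin_num.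
rewrite -abse_EFin EFinB !fineK // -integralB_EFin //.
have m12 : measurable_fun (Dset R) (EFin \o (fun x => F1 x - F2 x)).
  by apply/measurable_EFinP; exact: measurable_funB.
under eq_integral do rewrite -EFinB.
apply: le_trans; first by apply: le_abse_integral.
apply: (@le_trans _ _ (\int[lebesgue_measure]_(x in Dset R) (c + K * \1_B x)%:E)%E).
  apply: ge0_le_integral => //.
  - apply: measurableT_comp => //; exact: measurable_EFinP.
  - apply/measurable_EFinP; apply: measurable_funD => //.
    apply: measurable_funM => //; exact: measurable_indic.
under eq_integral do rewrite EFinD EFinM.
rewrite ge0_integralD //; last 2 first.
- by move=> x _; rewrite -EFinM lee_fin mulr_ge0.
- apply/measurable_EFinP; apply: measurable_funM => //; exact: measurable_indic.
rewrite ge0_integralZl_EFin //.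
- rewrite integral_indic // integral_cst //; have := Dset_mu R; rewrite /= => ->.
  by rewrite mule1.
- apply/measurable_EFinP; exact: measurable_indic.
Qed.

Lemma op_cont_at (R : realType) (G : topologicalType) (op : G -> G -> G) (phi : G -> R)
  (x e : G) : continuous (fun p : G * G => op p.1 p.2) -> continuous phi ->
  {for e, continuous (fun v => phi (op x v))}.
Proof.
move=> hop hphi.
apply: (@continuous_comp _ _ _ (fun v => op x v) phi); last exact: hphi.
apply: (@continuous_comp _ _ _ (fun v => (x, v)) (fun p : G * G => op p.1 p.2)); last exact: hop.
exact: (cvg_pair (cvg_cst x) cvg_id).
Qed.

Lemma step_val (R : realType) (T : Type) (f : Gbul R T) :
  exists (n : nat) (xk : nat -> T), forall j : J R, exists k, (k < n)%N /\ sval f j = xk k.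
Proof.
case: (svalP f) => n [a [a0 [an [ainc acst]]]].
exists n, (fun k => sval f (insubd (@j0 R) (a k))) => j.
have [k [kn kj]] := @step_cover R n a a0 an (sval j) (svalP j).
exists k; split => //.
have a0k : 0 <= a k by rewrite -a0; apply: (@step_mono R n a ainc); rewrite leq0n ltnW.
have ak1 : a k.+1 <= 1 by rewrite -an; apply: (@step_mono R n a ainc); rewrite kn leqnn.
have akJ : 0 <= a k < 1 by rewrite a0k (lt_le_trans (ainc k kn) ak1).
apply: (acst k j _ kn kj); rewrite insubdK //= ?lexx ?ainc // inE.
Qed.

Theorem mainTheorem7 (R : realType) (G : topologicalType)
  (op : G -> G -> G) (e : G) (inv : G -> G)
  (HG : is_top_gyrogroup op e inv)
  (phi : G -> R) (phi_cont : continuous phi)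
  (phi_bdd : exists M : R, forall x, `|phi x| <= M) :
  exists Phi : Gbul R G -> R,
    (exists M : R, forall f, `|Phi f| <= M) /\
    Gbul_continuous op e Phi /\
    (forall x : G, Phi (cbul R x) = phi x).
Proof.
case: HG => [[hid _] [_ [hop _]]].
case: phi_bdd => M HM.
have M0 : 0 <= M by apply: le_trans (HM e).
pose Phi (f : Gbul R G) := fine (\int[lebesgue_measure]_(x in Dset R) (phi (ext R G f x))%:E)%E.
have Phi_cst : forall x, Phi (cbul R x) = phi x.
  move=> x; rewrite /Phi /ext /= integral_cst; last exact: Dset_meas.
  by have := Dset_mu R; rewrite /= => ->; rewrite mule1.
exists Phi; split; last split; last exact: Phi_cst.
- exists M => f.
  have := @int_diff R (fun x => phi (ext R G f x)) (fun _ => 0) M M 0 set0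
    (ext_meas R G f phi) (measurable_cst _) (fun x => HM _) (fun x => ltac:(by rewrite normr0))
    measurable0 M0 (lexx 0).
  rewrite mul0e adde0 lee_fin.
  have -> : fine (\int[lebesgue_measure]_(x in Dset R) (0:R)%:E)%E = 0.
    rewrite integral_cst; last exact: Dset_meas.
    by rewrite mul0e.
  rewrite subr0; apply => x _.
  by rewrite subr0 mul0r addr0.
- move=> f delta d0.
  have [n [xk Hxk]] := step_val R G f.
  have d2 : 0 < delta / 2 by rewrite divr_gt0.
  have Hk : forall k : 'I_n, \forall v \near e,
      `|phi (xk (nat_of_ord k)) - phi (op (xk (nat_of_ord k)) v)| < delta / 2.
    move=> k; have := @op_cont_at R G op phi (xk (nat_of_ord k)) e hop phi_cont.
    move/cvgrPdist_lt => /(_ _ d2).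
    by rewrite (proj2 (hid _)).
  have := @filter_forall G _ _ (nbhs e) (nbhs_filter e) Hk; rewrite (@nbhsE G e) /= => -[V [oV Ve] VP].
  pose eps := delta / (4 * (M + 1)).
  have e0 : 0 < eps by rewrite divr_gt0 // mulr_gt0 // ltr_wpDl.
  exists V, eps; split => //; split => //; split => //.
  move=> g h Og Hh.
  pose Bs := sval @` [set j : J R | ~ V (sval g j)].
  have mBs : measurable Bs := step_meas R G g (fun t => ~ V t).
  have := @int_diff R (fun x => phi (ext R G h x)) (fun x => phi (ext R G f x))
    M (delta / 2) (2 * M) Bs (ext_meas R G h phi) (ext_meas R G f phi)
    (fun x => HM _) (fun x => HM _) mBs (ltW d2) (mulr_ge0 (ler0n _ 2) M0).
  have BsD : Bs `&` Dset R = Bs.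
    apply/setIidl => _ [j _ <-]; rewrite /Dset /= in_itv /=; exact: (svalP j).
  move=> H; have := H _; rewrite BsD => {H} Hle.
  have Hpt : forall x : R, Dset R x ->
      `|phi (ext R G h x) - phi (ext R G f x)| <= delta / 2 + 2 * M * \1_Bs x.
    move=> x Dx; set j := insubd (@j0 R) x.
    have sj : sval j = x := insubdJ R x Dx.
    rewrite /ext -/j (Hh j).
    have [Vg|nVg] := pselect (V (sval g j)).
      have [k [kn fk]] := Hxk j; rewrite fk.
      have := VP _ Vg (Ordinal kn); rewrite /= distrC => H'.
      apply: le_trans (ltW H') _; rewrite lerDl.
      by rewrite mulr_ge0 ?mulr_ge0 ?ler0n // indic_ge0.
    have Bx : Bs x by exists j.
    rewrite indicE mem_set // mulr1.
    have := ler_normB (phi (op (sval f j) (sval g j))) (phi (sval f j)).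
    have := HM (op (sval f j) (sval g j)); have := HM (sval f j).
    lra.
  have {}Hle := Hle Hpt.
  rewrite -lte_fin; apply: le_lt_trans Hle _.
  apply: (@le_lt_trans _ _ ((delta/2)%:E + (2*M)%:E * eps%:E)%E).
    apply: leeD2l; apply: lee_wpmul2l; first by rewrite lee_fin mulr_ge0.
    exact: ltW Og.
  rewrite -EFinM -EFinD lte_fin.
  have qd : eps * (4 * (M + 1)) = delta.
    by rewrite /eps divfK // gt_eqF // mulr_gt0 // ltr_wpDl.
  rewrite -qd; nra.
Qed.
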